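(* Let $G^1$ be a 1-wconnected 1-graph and let $d$ be the wdistance. For all maximal nodes $x,y,z$ of $G^1$: (i) $d(x,y)$ is an ordinal with $d(x,y)<\omega^2$; (ii) $d(x,y)=0$ if and only if $x=y$; (iii) $d(x,y)=d(y,x)$; (iv) $d(x,z)\le d(x,y)\oplus d(y,z)$, where $\oplus$ is the natural (Hessenberg) sum of ordinals.
   Context: 1-graphs. Let $G^0=\{X^0,B\}$ be a graph whose nodes are called 0-nodes and whose branches are two-element sets of 0-nodes. A 0-tip is an equivalence class of one-ended paths in $G^0$, two being equivalent if they are eventually identical. The 0-tips are partitioned into subsets. To some subsets a single 0-node is adjoined, each 0-node being adjoined to at most one subset. The resulting sets are the 1-nodes, $X^1$ is their set, and $G^1=\{X^0,B,X^1\}$ is a 1-graph. A node of $G^1$ is a 0-node or a 1-node. A 0-node is maximal if it is contained in no 1-node; every 1-node is maximal. 0-walks. A 0-walk is a conventional walk in $G^0$, finite, one-way infinite or two-way infinite, terminating at 0-nodes on any terminating side. It is extended if on each infinite side it is eventually identical to a one-ended path. It reaches a 1-node $x^1$ through a 0-tip if on some infinite side it is eventually identical to a representative of a 0-tip contained in $x^1$. It reaches $x^1$ through a branch if it terminates at a 0-node contained in $x^1$. 1-walks. A nontrivial two-ended 1-walk is a sequence $\langle x_0,W_0^0,x_1^1,W_1^0,\dots,x_{m-1}^1,W_{m-1}^0,x_m\rangle$ with $m\ge 1$ satisfying: - $x_1^1,\dots,x_{m-1}^1$ are 1-nodes, and $x_0,x_m$ are 0-nodes or 1-nodes; - each $W_k^0$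 is a nontrivial 0-walk reaching the two nodes adjacent to it in the sequence; - for each $k=1,\dots,m-1$, at least one of $W_{k-1}^0,W_k^0$ reaches $x_k^1$ through a 0-tip. Lengths. A two-ended 0-walk has length equal to its number of branch traversals. An extended one-ended 0-walk has length $\omega$. An extended endless 0-walk has length $\omega\cdot 2$. A two-ended 1-walk has length equal to the natural sum of the lengths of its 0-walks $W_k^0$, which has the form $\omega\cdot\tau_1+\tau_0$ with $\tau_1\ge1$. Wdistance. The wdistance $d(x,y)$ between nodes $x\ne y$ is the minimum length over all two-ended 0-walks or 1-walks terminating at $x$ and $y$; $d(x,x)=0$. 1-wconnected. $G^1$ is 1-wconnected if every two nodes (equivalently, every two branches) are joined by a 0-walk or a 1-walk, so the wdistance is always defined. *)

(* Defs.v *)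
From Stdlib Require Import List Arith Classical ClassicalEpsilon.
Import ListNotations.
Unset Implicit Arguments.

(* Ordinals below omega^2, written omega*hi + lo. *)
Record ord2 := O2 { hi : nat; lo : nat }.

Definition ord_le (a b : ord2) : Prop :=
  hi a < hi b \/ (hi a = hi b /\ lo a <= lo b).

(* natural (Hessenberg) sum: (w*a1+a0) (+) (w*b1+b0) = w*(a1+b1)+(a0+b0) *)
Definition nsum (a b : ord2) : ord2 := O2 (hi a + hi b) (lo a + lo b).

Definition ord_zero : ord2 := O2 0 0.

(* a one-ended path given by its node sequence (branches {p n, p (n+1)}) *)
Definition one_ended (V : Type) (adj : V -> V -> Prop) (p : nat -> V) : Prop :=
  (forall n, adj (p n) (p (S n))) /\ (forall i j, p i = p j -> i = j).

Definition ev_ident (V : Type) (p q : nat -> V) : Prop :=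
  exists k l, forall n, p (k + n) = q (l + n).

(* A 1-graph: 0-nodes V, branches = two-element sets {u,v} with adj u v
   (adj symmetric and irreflexive), 1-nodes N1.  [tipin a p] : the 0-tip of the
   one-ended path p belongs to the 1-node a; the blocks {tips in a} form a
   partition of the set of 0-tips; [emb a] is the 0-node possibly adjoined to a. *)
Record graph1 := {
  V : Type;
  adj : V -> V -> Prop;
  adj_sym : forall u v, adj u v -> adj v u;
  adj_irrefl : forall v, ~ adj v v;
  N1 : Type;
  tipin : N1 -> (nat -> V) -> Prop;
  emb : N1 -> option V;
  tipin_path : forall a p, tipin a p -> one_ended _ adj p;
  tipin_total : forall p, one_ended _ adj p -> exists a, tipin a p;
  tipin_unique : forall a b p, tipin a p -> tipin b p -> a = b;
  tipin_equiv : forall a p q, tipin a p -> one_ended _ adj q -> ev_ident _ p q -> tipin a q;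
  tipin_nonempty : forall a, exists p, tipin a p;
  emb_inj : forall a b v, emb a = Some v -> emb b = Some v -> a = b
}.

Definition node (G : graph1) : Type := (V G + N1 G)%type.

Definition maximal (G : graph1) (x : node G) : Prop :=
  match x with
  | inl v => forall a : N1 G, emb G a <> Some v
  | inr _ => True
  end.

(* WFin s : finite walk through the nodes of s (left to right);
   WR w : one-way infinite, terminating on the left at w 0, infinite to the right;
   WL w : one-way infinite, terminating on the right at w 0, infinite to the left
          (w n is the n-th node counted from the right end);
   WB l r : endless, l 0 = r 0, l going left, r going right. *)
Inductive walk0 (T : Type) :=
| WFin (s : list T)
| WR (w : nat -> T)
| WL (w : nat -> T)
| WB (l r : nat -> T).
Arguments WFin {T}. Arguments WR {T}. Arguments WL {T}. Arguments WB {T}.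

Fixpoint chain (T : Type) (R : T -> T -> Prop) (x : T) (s : list T) : Prop :=
  match s with
  | [] => True
  | y :: s' => R x y /\ chain T R y s'
  end.

Definition ray (T : Type) (R : T -> T -> Prop) (w : nat -> T) : Prop :=
  forall n, R (w n) (w (S n)).

Definition valid0 (G : graph1) (W : walk0 (V G)) : Prop :=
  match W with
  | WFin [] => False
  | WFin (x :: s) => chain _ (adj G) x s
  | WR w => ray _ (adj G) w
  | WL w => ray _ (adj G) w
  | WB l r => l 0 = r 0 /\ ray _ (adj G) l /\ ray _ (adj G) r
  end.

Definition nontrivial0 (T : Type) (W : walk0 T) : Prop :=
  match W with
  | WFin s => 2 <= length s
  | _ => True
  end.

Definition leftTerm (T : Type) (W : walk0 T) : option T :=
  match W with
  | WFin (x :: _) => Some x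
  | WR w => Some (w 0)
  | _ => None
  end.

Definition rightTerm (T : Type) (W : walk0 T) : option T :=
  match W with
  | WFin (x :: s) => Some (last s x)
  | WL w => Some (w 0)
  | _ => None
  end.

Definition leftRay (T : Type) (W : walk0 T) : option (nat -> T) :=
  match W with
  | WL w => Some w
  | WB l _ => Some l
  | _ => None
  end.

Definition rightRay (T : Type) (W : walk0 T) : option (nat -> T) :=
  match W with
  | WR w => Some w
  | WB _ r => Some r
  | _ => None
  end.

Definition len0 (T : Type) (W : walk0 T) : ord2 :=
  match W with
  | WFin s => O2 0 (length s - 1)
  | WR _ => O2 1 0
  | WL _ => O2 1 0
  | WB _ _ => O2 2 0
  end.

Definition ray_reaches_tip (G : graph1) (r : nat -> V G) (a : N1 G) : Prop :=
  exists p, tipin G a p /\ ev_ident _ r p.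

Definition tipL (G : graph1) (W : walk0 (V G)) (a : N1 G) : Prop :=
  exists r, leftRay _ W = Some r /\ ray_reaches_tip G r a.
Definition tipR (G : graph1) (W : walk0 (V G)) (a : N1 G) : Prop :=
  exists r, rightRay _ W = Some r /\ ray_reaches_tip G r a.

Definition reachesL (G : graph1) (W : walk0 (V G)) (x : node G) : Prop :=
  match x with
  | inl v => leftTerm _ W = Some v
  | inr a => (exists v, leftTerm _ W = Some v /\ emb G a = Some v) \/ tipL G W a
  end.
Definition reachesR (G : graph1) (W : walk0 (V G)) (x : node G) : Prop :=
  match x with
  | inl v => rightTerm _ W = Some v
  | inr a => (exists v, rightTerm _ W = Some v /\ emb G a = Some v) \/ tipR G W a
  end.

Record walk1 (G : graph1) := {
  wm : nat;
  wx : nat -> node G;            (* x_0 .. x_m *)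
  wW : nat -> walk0 (V G)        (* W_0 .. W_{m-1} *)
}.

Definition is_walk1 (G : graph1) (w : walk1 G) : Prop :=
  1 <= wm G w /\
  (forall k, 0 < k < wm G w -> exists a, wx G w k = inr a) /\
  (forall k, k < wm G w ->
     valid0 G (wW G w k) /\ nontrivial0 _ (wW G w k) /\
     reachesL G (wW G w k) (wx G w k) /\ reachesR G (wW G w k) (wx G w (S k))) /\
  (forall k a, 0 < k < wm G w -> wx G w k = inr a ->
     tipR G (wW G w (k - 1)) a \/ tipL G (wW G w k) a).

Fixpoint nsum_upto (f : nat -> ord2) (m : nat) : ord2 :=
  match m with
  | 0 => ord_zero
  | S m' => nsum (nsum_upto f m') (f m')
  end.

Definition len1 (G : graph1) (w : walk1 G) : ord2 :=
  nsum_upto (fun k => len0 _ (wW G w k)) (wm G w).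

Inductive gwalk (G : graph1) :=
| GW0 (W : walk0 (V G))
| GW1 (w : walk1 G).

Definition joins (G : graph1) (x y : node G) (w : gwalk G) : Prop :=
  match w with
  | GW0 _ W => (exists s, W = WFin s) /\ valid0 G W /\
             (exists u, x = inl u /\ leftTerm _ W = Some u) /\
             (exists v, y = inl v /\ rightTerm _ W = Some v)
  | GW1 _ w1 => is_walk1 G w1 /\ wx G w1 0 = x /\ wx G w1 (wm G w1) = y
  end.

Definition glen (G : graph1) (w : gwalk G) : ord2 :=
  match w with
  | GW0 _ W => len0 _ W
  | GW1 _ w1 => len1 G w1
  end.

Definition is_wdist (G : graph1) (x y : node G) (o : ord2) : Prop :=
  (x = y /\ o = ord_zero) \/
  (x <> y /\ (exists w, joins G x y w /\ glen G w = o) /\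
   (forall w, joins G x y w -> ord_le o (glen G w))).

Definition wdist (G : graph1) (x y : node G) : ord2 :=
  match excluded_middle_informative (exists o, is_wdist G x y o) with
  | left h => proj1_sig (constructive_indefinite_description _ h)
  | right _ => ord_zero
  end.

Definition wconnected1 (G : graph1) : Prop :=
  forall x y : node G, x <> y -> exists w, joins G x y w.

(* Main.v *)
Require Import Defs.
From Stdlib Require Import List Arith Lia Classical ClassicalEpsilon.
Import ListNotations.

Lemma ord_eq : forall a b : ord2, hi a = hi b -> lo a = lo b -> a = b.
Proof. intros [a1 a2] [b1 b2]; simpl; intros; subst; reflexivity. Qed.

Definition cle (a b : ord2) := hi a <= hi b /\ lo a <= lo b.

Lemma cle_le : forall a b, cle a b -> ord_le a b.
Proof. unfold cle, ord_le; intros; lia. Qed.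
Lemma ord_le_trans : forall a b c, ord_le a b -> ord_le b c -> ord_le a c.
Proof. unfold ord_le; intros; lia. Qed.
Lemma ord_le_antisym : forall a b, ord_le a b -> ord_le b a -> a = b.
Proof. unfold ord_le; intros; apply ord_eq; lia. Qed.

Lemma nat_min : forall P : nat -> Prop, (exists n, P n) -> exists n, P n /\ forall m, P m -> n <= m.
Proof.
  intros P [n Hn]. revert Hn. induction n as [n IH] using lt_wf_ind. intros Hn.
  destruct (classic (exists m, m < n /\ P m)) as [[m [Hm Pm]]|H].
  - exact (IH m Hm Pm).
  - exists n; split; auto. intros m Pm. destruct (le_lt_dec n m); auto.
    exfalso; apply H; eauto.
Qed.

Lemma ord_min : forall P : ord2 -> Prop, (exists o, P o) -> exists o, P o /\ forall o', P o' -> ord_le o o'.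
Proof.
  intros P [o Ho].
  destruct (nat_min (fun h => exists o, P o /\ hi o = h)) as [h0 [[o1 [P1 E1]] M1]]; [eauto|].
  destruct (nat_min (fun l => exists o, P o /\ hi o = h0 /\ lo o = l)) as [l0 [[o2 [P2 [E2 E3]]] M2]]; [eauto|].
  exists o2; split; auto. intros o' P'. unfold ord_le.
  assert (h0 <= hi o') by (apply M1; eauto).
  destruct (Nat.eq_dec (hi o') h0).
  - right. split; [lia|]. assert (l0 <= lo o') by (apply M2; eauto). lia.
  - left; lia.
Qed.

Lemma nsum_upto_ext : forall f g m, (forall k, k < m -> f k = g k) -> nsum_upto f m = nsum_upto g m.
Proof. intros f g m; induction m; intros H; simpl; auto.
  rewrite IHm by (intros; apply H; lia). rewrite H by lia. reflexivity. Qed.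

Lemma nsum_upto_shift : forall f m, nsum_upto f (S m) = nsum (f 0) (nsum_upto (fun k => f (S k)) m).
Proof. intros f m; induction m.
 - apply ord_eq; simpl; lia.
 - change (nsum_upto f (S (S m))) with (nsum (nsum_upto f (S m)) (f (S m))).
   rewrite IHm. apply ord_eq; simpl; lia.
Qed.

Lemma nsum_upto_app : forall f a b, nsum_upto f (a + b) = nsum (nsum_upto f a) (nsum_upto (fun k => f (a + k)) b).
Proof. intros f a b; induction b.
 - rewrite Nat.add_0_r. apply ord_eq; simpl; lia.
 - rewrite Nat.add_succ_r. simpl. rewrite IHb. apply ord_eq; simpl; lia.
Qed.

Lemma nsum_upto_rev : forall m f, nsum_upto (fun k => f (m - S k)) m = nsum_upto f m.
Proof. induction m; intros f; [reflexivity|].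
  rewrite (nsum_upto_shift f m).
  change (nsum_upto (fun k => f (S m - S k)) (S m)) with (nsum (nsum_upto (fun k => f (S m - S k)) m) (f (S m - S m))).
  rewrite Nat.sub_diag.
  rewrite (nsum_upto_ext (fun k => f (S m - S k)) (fun k => (fun j => f (S j)) (m - S k)) m)
    by (intros; cbv beta; f_equal; lia).
  rewrite (IHm (fun j => f (S j))). apply ord_eq; simpl; lia.
Qed.

Definition vl {T} (R : T -> T -> Prop) (l : list T) : Prop :=
  match l with [] => False | x :: s => chain T R x s end.

Lemma last_cons : forall {T} (s : list T) a x, last (a :: s) x = last s a.
Proof. intros T; induction s as [|b s IH]; intros a x; [reflexivity|].
  change (last (a :: b :: s) x) with (last (b :: s) x). rewrite !IH. reflexivity. Qed.

Lemma last_app : forall {T} (s t : list T) x, last (s ++ t) x = last t (last s x).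
Proof. intros T; induction s as [|a s IH]; intros t x; [reflexivity|].
  change ((a :: s) ++ t) with (a :: (s ++ t)). rewrite !last_cons. apply IH. Qed.

Lemma chain_app : forall {T} (R : T -> T -> Prop) s t x,
  chain T R x (s ++ t) <-> chain T R x s /\ chain T R (last s x) t.
Proof. intros T R; induction s as [|a s IH]; intros t x; cbn [chain app].
  - simpl. tauto.
  - specialize (IH t a). rewrite last_cons. tauto. Qed.

Lemma vl_nth : forall {T} (R : T -> T -> Prop) l d n, vl R l -> S n < length l -> R (nth n l d) (nth (S n) l d).
Proof. intros T R l d. induction l as [|x s IH]; intros n H Hn; [destruct H|].
  destruct s as [|y s']; simpl in Hn; [lia|].
  destruct H as [Hxy Hc]. destruct n as [|n].
  - exact Hxy.
  - exact (IH n Hc ltac:(simpl in *; lia)).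
Qed.

Lemma vl_snoc : forall {T} (R : T -> T -> Prop) l x d, vl R l -> R (last l d) x -> vl R (l ++ [x]).
Proof. intros T R [|z t] x d H Hr; [destruct H|].
  change ((z :: t) ++ [x]) with (z :: (t ++ [x])). cbn [vl] in *.
  apply (proj2 (chain_app R t [x] z)). split; [exact H|]. rewrite last_cons in Hr. cbn [chain]. tauto. Qed.

Lemma vl_rev : forall {T} (R : T -> T -> Prop), (forall u v, R u v -> R v u) ->
  forall l, vl R l -> vl R (rev l).
Proof. intros T R Hs [|x s] H; [destruct H|].
  revert x H. induction s as [|y s IH]; intros x H; [exact I|].
  destruct H as [Hxy Hc].
  change (rev (x :: y :: s)) with (rev (y :: s) ++ [x]).
  apply (vl_snoc R _ x x); [apply IH; exact Hc|].
  change (rev (y::s)) with (rev s ++ [y]). rewrite last_last. apply Hs; exact Hxy.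
Qed.

Lemma nth_last' : forall {T} (s : list T) x d, nth (length s) (x :: s) d = last s x.
Proof. intros T; induction s as [|y s IH]; intros x d; [reflexivity|].
  change (nth (length (y :: s)) (x :: y :: s) d) with (nth (length s) (y :: s) d).
  rewrite IH. symmetry. apply last_cons. Qed.

Definition prepend {T} (l : list T) (w : nat -> T) (n : nat) : T :=
  nth n l (w (n + 1 - length l)).

Lemma ray_prepend : forall {T} (R : T -> T -> Prop) x s w, vl R (x :: s) -> last s x = w 0 -> ray T R w ->
  ray T R (prepend (x :: s) w).
Proof. intros T R x s w Hl Hlast Hw n. unfold prepend.
  destruct (lt_eq_lt_dec (S n) (length (x :: s))) as [[h|h]|h].
  - rewrite (nth_indep (x :: s) (w (n + 1 - length (x :: s))) x) by lia.
    rewrite (nth_indep (x :: s) (w (S n + 1 - length (x :: s))) x) by lia.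
    apply vl_nth; auto.
  - rewrite (@nth_overflow _ (x :: s) (S n)) by lia. simpl in h. injection h as h. subst n.
    rewrite nth_last'. rewrite Hlast. simpl length. replace (S (length s) + 1 - S (length s)) with 1 by lia.
    apply Hw.
  - rewrite !nth_overflow by lia. replace (S n + 1 - length (x :: s)) with (S (n + 1 - length (x :: s))) by lia.
    apply Hw.
Qed.

Lemma ev_trans : forall T (p q r : nat -> T), ev_ident T p q -> ev_ident T q r -> ev_ident T p r.
Proof. intros T p q r [k1 [l1 H1]] [k2 [l2 H2]]. exists (k1 + k2), (l2 + l1). intros n.
  rewrite <- Nat.add_assoc, H1. replace (l1 + (k2 + n)) with (k2 + (l1 + n)) by lia. rewrite H2. f_equal; lia. Qed.

Lemma ev_prepend : forall T l (w : nat -> T), ev_ident T (prepend l w) w.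
Proof. intros. exists (length l), 1. intros n. unfold prepend. rewrite nth_overflow by lia. f_equal; lia. Qed.

Lemma rev_snoc_head : forall {T} (s : list T) x, exists t, rev s ++ [x] = last s x :: t.
Proof. intros T s x. induction s as [|y s' _] using rev_ind.
 - exists []. reflexivity.
 - exists (rev s' ++ [x]). rewrite rev_app_distr, last_last. reflexivity. Qed.

Definition rev0 {T} (W : walk0 T) : walk0 T :=
  match W with
  | WFin s => WFin (rev s)
  | WR w => WL w
  | WL w => WR w
  | WB l r => WB r l
  end.

Lemma lT_rev0 : forall T (W : walk0 T), leftTerm T (rev0 W) = rightTerm T W.
Proof. intros T [s|w|w|l r]; try reflexivity.
  destruct s as [|x s]; [reflexivity|].
  destruct (rev_snoc_head s x) as [t E].
  cbn [rev0]. change (rev (x::s)) with (rev s ++ [x]). rewrite E. reflexivity. Qed.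

Lemma rT_rev0 : forall T (W : walk0 T), rightTerm T (rev0 W) = leftTerm T W.
Proof. intros T [s|w|w|l r]; try reflexivity.
  destruct s as [|x s]; [reflexivity|].
  destruct (rev_snoc_head s x) as [t E].
  cbn [rev0]. change (rev (x::s)) with (rev s ++ [x]). rewrite E. cbn [rightTerm leftTerm].
  rewrite <- (last_cons t (last s x) x). rewrite <- E, last_last. reflexivity. Qed.

Lemma lR_rev0 : forall T (W : walk0 T), leftRay T (rev0 W) = rightRay T W.
Proof. intros T [s|w|w|l r]; reflexivity. Qed.
Lemma rR_rev0 : forall T (W : walk0 T), rightRay T (rev0 W) = leftRay T W.
Proof. intros T [s|w|w|l r]; reflexivity. Qed.
Lemma len0_rev0 : forall T (W : walk0 T), len0 T (rev0 W) = len0 T W.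
Proof. intros T [s|w|w|l r]; try reflexivity. cbn. rewrite length_rev. reflexivity. Qed.
Lemma nontriv_rev0 : forall T (W : walk0 T), nontrivial0 T W -> nontrivial0 T (rev0 W).
Proof. intros T [s|w|w|l r]; cbn; auto. rewrite length_rev. auto. Qed.

Lemma valid_rev0 : forall G (W : walk0 (V G)), valid0 G W -> valid0 G (rev0 W).
Proof. intros G [s|w|w|l r] H; cbn [rev0].
  - exact (vl_rev (adj G) (adj_sym G) s H).
  - exact H.
  - exact H.
  - destruct H as [H1 [H2 H3]]. cbn. auto.
Qed.

Lemma tipL_rev0 : forall G W a, tipL G (rev0 W) a <-> tipR G W a.
Proof. intros. unfold tipL, tipR. rewrite lR_rev0. tauto. Qed.
Lemma tipR_rev0 : forall G W a, tipR G (rev0 W) a <-> tipL G W a.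
Proof. intros. unfold tipL, tipR. rewrite rR_rev0. tauto. Qed.

Lemma reachesL_rev0 : forall G W x, reachesL G (rev0 W) x <-> reachesR G W x.
Proof. intros G W [v|a]; unfold reachesL, reachesR; rewrite lT_rev0; [tauto|].
  rewrite tipL_rev0. tauto. Qed.
Lemma reachesR_rev0 : forall G W x, reachesR G (rev0 W) x <-> reachesL G W x.
Proof. intros G W [v|a]; unfold reachesL, reachesR; rewrite rT_rev0; [tauto|].
  rewrite tipR_rev0. tauto. Qed.

Lemma reachesL_tr : forall G W M x, leftTerm _ M = leftTerm _ W -> (forall a, tipL G W a -> tipL G M a) ->
  reachesL G W x -> reachesL G M x.
Proof. intros G W M [v|a] E T H; unfold reachesL in *; rewrite E; [exact H|].
  destruct H as [H|H]; [left; exact H | right; apply T, H]. Qed.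
Lemma reachesR_tr : forall G W M x, rightTerm _ M = rightTerm _ W -> (forall a, tipR G W a -> tipR G M a) ->
  reachesR G W x -> reachesR G M x.
Proof. intros G W M [v|a] E T H; unfold reachesR in *; rewrite E; [exact H|].
  destruct H as [H|H]; [left; exact H | right; apply T, H]. Qed.

Definition mergeFR {T} (s : list T) (W' : walk0 T) : walk0 T :=
  match W' with
  | WFin (_ :: t) => WFin (s ++ t)
  | WR w => WR (prepend s w)
  | _ => WFin s
  end.
Definition merge {T} (W W' : walk0 T) : walk0 T :=
  match W with
  | WFin s => mergeFR s W'
  | WL w => match W' with
            | WR w' => WB w w'
            | WFin t => rev0 (mergeFR (rev t) (WR w))
            | _ => W
            end
  | _ => W
  end.

Definition mergeP (G : graph1) (W W' M : walk0 (V G)) : Prop :=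
  valid0 G M /\ nontrivial0 _ M /\
  leftTerm _ M = leftTerm _ W /\ (forall a, tipL G W a -> tipL G M a) /\
  rightTerm _ M = rightTerm _ W' /\ (forall a, tipR G W' a -> tipR G M a) /\
  cle (len0 _ M) (nsum (len0 _ W) (len0 _ W')).

Lemma mergeFR_ok : forall G s W' v, valid0 G (WFin s) -> nontrivial0 _ (WFin s) -> valid0 G W' ->
  rightTerm _ (WFin s) = Some v -> leftTerm _ W' = Some v -> mergeP G (WFin s) W' (mergeFR s W').
Proof.
  intros G s W' v Hs Hn HW' Er El.
  destruct s as [|x s1]; [destruct Hs|].
  cbn in Er. injection Er as Er.
  destruct W' as [t|w|w|l r]; cbn in El; try discriminate.
  - destruct t as [|y t]; [discriminate|]. injection El as El. subst y.
    unfold mergeP. cbn [mergeFR].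
    split; [|split; [|split; [|split; [|split; [|split]]]]].
    + change (chain _ (adj G) x (s1 ++ t)). apply (proj2 (chain_app _ _ _ _)). split; [exact Hs|]. rewrite Er; exact HW'.
    + cbn in *. rewrite length_app. lia.
    + reflexivity.
    + intros a [r [Hr _]]; discriminate.
    + change ((x :: s1) ++ t) with (x :: (s1 ++ t)). cbn [rightTerm]. rewrite last_app, Er. reflexivity.
    + intros a [r [Hr _]]; discriminate.
    + unfold cle. cbn. rewrite length_app. lia.
  - unfold mergeP. cbn [mergeFR].
    split; [|split; [|split; [|split; [|split; [|split]]]]].
    + apply ray_prepend; auto. rewrite Er; congruence.
    + exact I.
    + reflexivity.
    + intros a [r [Hr _]]; discriminate.
    + reflexivity.
    + intros a [r [Hr [p [Hp Hev]]]]. cbn in Hr. injection Hr as <-.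
      exists (prepend (x :: s1) w). split; [reflexivity|]. exists p. split; auto.
      eapply ev_trans; [apply ev_prepend | exact Hev].
    + unfold cle. cbn. lia.
Qed.

Lemma merge_ok : forall G W W' v, valid0 G W -> valid0 G W' -> nontrivial0 _ W -> nontrivial0 _ W' ->
  rightTerm _ W = Some v -> leftTerm _ W' = Some v -> mergeP G W W' (merge W W').
Proof.
  intros G W W' v HW HW' Hn Hn' Er El.
  destruct W as [s|w|w|l r]; cbn in Er; try discriminate.
  - exact (mergeFR_ok G s W' v HW Hn HW' Er El).
  - injection Er as Er.
    destruct W' as [t|w'|w'|l r]; cbn in El; try discriminate.
    + assert (MF := mergeFR_ok G (rev t) (WR w) v (valid_rev0 G (WFin t) HW')
                 (nontriv_rev0 _ (WFin t) Hn') HW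
                 ltac:(change (WFin (rev t)) with (rev0 (WFin t)); rewrite rT_rev0; exact El)
                 ltac:(cbn; congruence)).
      change (WFin (rev t)) with (rev0 (WFin t)) in MF.
      cbn [merge].
      set (M0 := mergeFR (rev t) (WR w)) in *.
      destruct MF as [Mv [Mn [MlT [MtL [MrT [MtR Mc]]]]]].
      split; [|split; [|split; [|split; [|split; [|split]]]]].
      * apply valid_rev0; exact Mv.
      * apply nontriv_rev0; exact Mn.
      * rewrite lT_rev0, MrT. reflexivity.
      * intros a Ha. apply tipL_rev0. apply MtR. exact Ha.
      * rewrite rT_rev0, MlT, lT_rev0. reflexivity.
      * intros a [r [Hr _]]; discriminate.
      * unfold cle in *. rewrite len0_rev0. rewrite len0_rev0 in Mc. cbn in *. lia.
    + injection El as El.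
      cbn [merge]. split; [|split; [|split; [|split; [|split; [|split]]]]].
      * cbn. split; [congruence|]. split; assumption.
      * exact I.
      * reflexivity.
      * intros a Ha; exact Ha.
      * reflexivity.
      * intros a Ha; exact Ha.
      * unfold cle; cbn; lia.
Qed.

Definition rev1 (G : graph1) (w : walk1 G) : walk1 G :=
  Build_walk1 G (wm G w) (fun k => wx G w (wm G w - k)) (fun k => rev0 (wW G w (wm G w - S k))).

Lemma rev1_ok : forall G w, is_walk1 G w ->
  is_walk1 G (rev1 G w) /\ wx G (rev1 G w) 0 = wx G w (wm G w) /\
  wx G (rev1 G w) (wm G (rev1 G w)) = wx G w 0 /\ len1 G (rev1 G w) = len1 G w.
Proof.
  intros G [m x W] [A [B [C D]]]. unfold is_walk1, len1, rev1 in *; cbn [wm wx wW] in *.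
  split; [split; [exact A|split; [|split]]|split; [|split]].
  - intros k Hk. apply B. lia.
  - intros k Hk. destruct (C (m - S k) ltac:(lia)) as [Hv [Hn [HL HR]]].
    split; [apply valid_rev0; exact Hv|]. split; [apply nontriv_rev0; exact Hn|]. split.
    + apply reachesL_rev0. replace (m - k) with (S (m - S k)) by lia. exact HR.
    + apply reachesR_rev0. exact HL.
  - intros k a Hk Ha. destruct (D (m - k) a ltac:(lia) Ha) as [T|T].
    + right. apply tipL_rev0. replace (m - S k) with (m - k - 1) by lia. exact T.
    + left. apply tipR_rev0. replace (m - S (k - 1)) with (m - k) by lia. exact T.
  - rewrite Nat.sub_0_r. reflexivity.
  - rewrite Nat.sub_diag. reflexivity.
  - rewrite (nsum_upto_ext _ (fun k => len0 _ (W (m - S k)))) by (intros; apply len0_rev0).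
    apply (nsum_upto_rev m (fun k => len0 _ (W k))).
Qed.

Definition cat1 (G : graph1) (w1 w2 : walk1 G) : walk1 G :=
  Build_walk1 G (wm G w1 + wm G w2)
    (fun k => if le_lt_dec k (wm G w1) then wx G w1 k else wx G w2 (k - wm G w1))
    (fun k => if le_lt_dec (wm G w1) k then wW G w2 (k - wm G w1) else wW G w1 k).

Lemma cat1_ok : forall G w1 w2, is_walk1 G w1 -> is_walk1 G w2 ->
  wx G w1 (wm G w1) = wx G w2 0 ->
  (exists a, wx G w2 0 = inr a /\ (tipR G (wW G w1 (wm G w1 - 1)) a \/ tipL G (wW G w2 0) a)) ->
  is_walk1 G (cat1 G w1 w2) /\ wx G (cat1 G w1 w2) 0 = wx G w1 0 /\
  wx G (cat1 G w1 w2) (wm G (cat1 G w1 w2)) = wx G w2 (wm G w2) /\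
  len1 G (cat1 G w1 w2) = nsum (len1 G w1) (len1 G w2).
Proof.
  intros G [m1 x1 W1] [m2 x2 W2] [A1 [B1 [C1 D1]]] [A2 [B2 [C2 D2]]] Ey [a0 [Ea0 Ta0]].
  unfold is_walk1, len1, cat1 in *; cbn [wm wx wW] in *.
  split; [split; [lia|split; [|split]]|split; [|split]].
  - intros k Hk. destruct (le_lt_dec k m1) as [h|h].
    + destruct (Nat.eq_dec k m1) as [->|ne].
      * rewrite Ey. eauto.
      * apply B1; lia.
    + apply B2; lia.
  - intros k Hk. destruct (le_lt_dec m1 k) as [h|h].
    + destruct (C2 (k - m1) ltac:(lia)) as [Hv [Hn [HL HR]]]. split; [|split; [|split]]; auto.
      * destruct (le_lt_dec k m1) as [h'|h'].
        -- assert (k = m1) by lia. subst k. rewrite Nat.sub_diag in *. rewrite Ey. exact HL.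
        -- exact HL.
      * destruct (le_lt_dec (S k) m1) as [h'|h']; [lia|].
        replace (S k - m1) with (S (k - m1)) by lia. exact HR.
    + destruct (C1 k h) as [Hv [Hn [HL HR]]]. split; [|split; [|split]]; auto.
      * destruct (le_lt_dec k m1); [exact HL| lia].
      * destruct (le_lt_dec (S k) m1); [exact HR | lia].
  - intros k a Hk Ha. destruct (le_lt_dec k m1) as [h|h].
    + destruct (Nat.eq_dec k m1) as [->|ne].
      * rewrite Ey, Ea0 in Ha. injection Ha as <-.
        destruct (le_lt_dec m1 (m1 - 1)); [lia|]. destruct (le_lt_dec m1 m1); [|lia].
        rewrite Nat.sub_diag. exact Ta0.
      * destruct (D1 k a ltac:(lia) Ha) as [T|T]; [left|right].
        -- destruct (le_lt_dec m1 (k-1)); [lia|exact T].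
        -- destruct (le_lt_dec m1 k); [lia|exact T].
    + destruct (D2 (k - m1) a ltac:(lia) Ha) as [T|T]; [left|right].
      * destruct (le_lt_dec m1 (k-1)); [|lia]. replace (k - 1 - m1) with (k - m1 - 1) by lia. exact T.
      * destruct (le_lt_dec m1 k); [exact T|lia].
  - destruct (le_lt_dec 0 m1); [reflexivity|lia].
  - destruct (le_lt_dec (m1 + m2) m1); [lia|]. f_equal; lia.
  - rewrite nsum_upto_app. f_equal.
    + apply nsum_upto_ext. intros k Hk. destruct (le_lt_dec m1 k); [lia|reflexivity].
    + apply nsum_upto_ext. intros k Hk. cbv beta. destruct (le_lt_dec m1 (m1 + k)); [|lia].
      f_equal; f_equal; lia.
Qed.

Definition catm (G : graph1) (w1 w2 : walk1 G) : walk1 G :=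
  Build_walk1 G (wm G w1 + wm G w2 - 1)
    (fun k => if le_lt_dec (wm G w1) k then wx G w2 (k + 1 - wm G w1) else wx G w1 k)
    (fun k => match lt_eq_lt_dec k (wm G w1 - 1) with
              | inleft (left _) => wW G w1 k
              | inleft (right _) => merge (wW G w1 (wm G w1 - 1)) (wW G w2 0)
              | inright _ => wW G w2 (k + 1 - wm G w1)
              end).

Lemma catm_ok : forall G w1 w2, is_walk1 G w1 -> is_walk1 G w2 ->
  mergeP G (wW G w1 (wm G w1 - 1)) (wW G w2 0) (merge (wW G w1 (wm G w1 - 1)) (wW G w2 0)) ->
  is_walk1 G (catm G w1 w2) /\ wx G (catm G w1 w2) 0 = wx G w1 0 /\
  wx G (catm G w1 w2) (wm G (catm G w1 w2)) = wx G w2 (wm G w2) /\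
  cle (len1 G (catm G w1 w2)) (nsum (len1 G w1) (len1 G w2)).
Proof.
  intros G [m1 x1 W1] [m2 x2 W2] [A1 [B1 [C1 D1]]] [A2 [B2 [C2 D2]]] MP.
  unfold is_walk1, len1, catm in *; cbn [wm wx wW] in *.
  set (M := merge (W1 (m1 - 1)) (W2 0)) in *.
  destruct MP as [Mv [Mn [MlT [MtL [MrT [MtR Mc]]]]]].
  split; [split; [lia|split; [|split]]|split; [|split]].
  - intros k Hk. destruct (le_lt_dec m1 k) as [h|h].
    + apply B2; lia.
    + apply B1; lia.
  - intros k Hk. destruct (lt_eq_lt_dec k (m1 - 1)) as [[h|h]|h].
    + destruct (C1 k ltac:(lia)) as [Hv [Hn [HL HR]]]. split; [|split; [|split]]; auto.
      * destruct (le_lt_dec m1 k); [lia|exact HL].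
      * destruct (le_lt_dec m1 (S k)); [lia|exact HR].
    + subst k. destruct (C1 (m1 - 1) ltac:(lia)) as [Hv [Hn [HL HR]]].
      destruct (C2 0 ltac:(lia)) as [Hv2 [Hn2 [HL2 HR2]]].
      split; [|split; [|split]]; auto.
      * destruct (le_lt_dec m1 (m1 - 1)); [lia|]. eapply reachesL_tr; eauto.
      * destruct (le_lt_dec m1 (S (m1 - 1))); [|lia].
        replace (S (m1 - 1) + 1 - m1) with 1 by lia. eapply reachesR_tr; eauto.
    + destruct (C2 (k + 1 - m1) ltac:(lia)) as [Hv [Hn [HL HR]]]. split; [|split; [|split]]; auto.
      * destruct (le_lt_dec m1 k); [exact HL|lia].
      * destruct (le_lt_dec m1 (S k)); [|lia].
        replace (S k + 1 - m1) with (S (k + 1 - m1)) by lia. exact HR.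
  - intros k a Hk Ha. destruct (le_lt_dec m1 k) as [h|h].
    + destruct (D2 (k + 1 - m1) a ltac:(lia) Ha) as [T|T].
      * left. destruct (lt_eq_lt_dec (k - 1) (m1 - 1)) as [[?|e]|?]; try lia.
        -- apply MtR. replace (k + 1 - m1 - 1) with 0 in T by lia. exact T.
        -- replace (k - 1 + 1 - m1) with (k + 1 - m1 - 1) by lia. exact T.
      * right. destruct (lt_eq_lt_dec k (m1 - 1)) as [[?|?]|?]; try lia. exact T.
    + destruct (D1 k a ltac:(lia) Ha) as [T|T].
      * left. destruct (lt_eq_lt_dec (k - 1) (m1 - 1)) as [[?|?]|?]; try lia. exact T.
      * right. destruct (lt_eq_lt_dec k (m1 - 1)) as [[?|e]|?]; try lia.
        -- exact T.
        -- apply MtL. rewrite <- e. exact T.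
  - destruct (le_lt_dec m1 0); [lia|reflexivity].
  - destruct (le_lt_dec m1 (m1 + m2 - 1)); [|lia]. f_equal; lia.
  - destruct m1 as [|p1]; [lia|]. destruct m2 as [|p2]; [lia|].
    replace (S p1 + S p2 - 1) with (p1 + S p2) by lia.
    rewrite nsum_upto_app, nsum_upto_shift.
    rewrite (nsum_upto_shift (fun k => len0 _ (W2 k)) p2).
    rewrite (nsum_upto_ext _ (fun k => len0 _ (W1 k)) p1).
    2:{ intros k Hk. destruct (lt_eq_lt_dec k (S p1 - 1)) as [[?|?]|?]; try lia; reflexivity. }
    rewrite (nsum_upto_ext _ (fun k => len0 _ (W2 (S k))) p2).
    2:{ intros k Hk. cbv beta. destruct (lt_eq_lt_dec (p1 + S k) (S p1 - 1)) as [[?|?]|?]; try lia.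
        f_equal; f_equal; lia. }
    cbv beta. destruct (lt_eq_lt_dec (p1 + 0) (S p1 - 1)) as [[?|?]|?]; try lia.
    replace (S p1 - 1) with p1 in Mc by lia.
    unfold cle in *. cbn [nsum_upto nsum hi lo] in *. lia.
Qed.

Lemma joins_walk1 : forall G x y w, joins G x y w -> x <> y ->
  exists w1, is_walk1 G w1 /\ wx G w1 0 = x /\ wx G w1 (wm G w1) = y /\ len1 G w1 = glen G w.
Proof.
  intros G x y [W|w1] H Hne.
  - destruct H as [[s ->] [Hv [[u [-> Hu]] [v [-> Hv']]]]].
    exists (Build_walk1 G 1 (fun k => match k with 0 => inl u | _ => inl v end) (fun _ => WFin s)).
    unfold is_walk1, len1; cbn [wm wx wW].
    split; [split; [lia|split; [|split]]|split; [reflexivity|split; [reflexivity|]]].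
    + intros; lia.
    + intros k Hk. assert (k = 0) by lia; subst.
      split; [exact Hv|split; [|split; [exact Hu|exact Hv']]].
      destruct s as [|a [|b s]]; cbn in *; try lia; try (exfalso; exact Hv); [injection Hu as <-; injection Hv' as <-; congruence].
    + intros; lia.
    + reflexivity.
  - destruct H as [H1 [H2 H3]]; exists w1; auto.
Qed.

Lemma len1_pos : forall G w, is_walk1 G w -> 0 < hi (len1 G w) + lo (len1 G w).
Proof.
  intros G [m x W] [A [_ [C _]]]. unfold len1; cbn [wm wW] in *.
  destruct m as [|p]; [lia|].
  destruct (C p ltac:(lia)) as [_ [Hn _]].
  cbn [nsum_upto nsum hi lo].
  destruct (W p) as [s|w|w|l r]; cbn in *; lia.
Qed.

Lemma rev_gw : forall G x y w, joins G x y w -> exists w', joins G y x w' /\ glen G w' = glen G w.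
Proof.
  intros G x y [W|w1] H.
  - destruct H as [[s ->] [Hv [[u [-> Hu]] [v [-> Hv']]]]].
    exists (GW0 G (WFin (rev s))). split.
    + split; [eauto|]. split; [exact (valid_rev0 G (WFin s) Hv)|].
      split; [exists v|exists u]; split; try reflexivity.
      * change (WFin (rev s)) with (rev0 (WFin s)). rewrite lT_rev0. exact Hv'.
      * change (WFin (rev s)) with (rev0 (WFin s)). rewrite rT_rev0. exact Hu.
    + cbn. rewrite length_rev. reflexivity.
  - destruct H as [H1 [H2 H3]].
    destruct (rev1_ok G w1 H1) as [R1 [R2 [R3 R4]]].
    exists (GW1 G (rev1 G w1)). split.
    + split; [exact R1|]. split; congruence.
    + exact R4.
Qed.

Lemma wdist_sym : forall G x y o, is_wdist G x y o -> is_wdist G y x o.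
Proof.
  intros G x y o [[-> ->]|[ne [[w [Hj Hl]] Hm]]]; [left; auto|right].
  split; [auto|]. split.
  - destruct (rev_gw G x y w Hj) as [w' [Hj' Hl']]. exists w'; split; auto; congruence.
  - intros w0 Hw. destruct (rev_gw G y x w0 Hw) as [w' [Hj' Hl']]. rewrite <- Hl'. apply Hm; auto.
Qed.

Lemma wdist_uniq : forall G x y o1 o2, is_wdist G x y o1 -> is_wdist G x y o2 -> o1 = o2.
Proof.
  intros G x y o1 o2 [[e1 ->]|[ne1 [[w1 [Hj1 Hl1]] Hm1]]] [[e2 ->]|[ne2 [[w2 [Hj2 Hl2]] Hm2]]];
    try reflexivity; try contradiction.
  apply ord_le_antisym.
  - rewrite <- Hl2. apply Hm1; auto.
  - rewrite <- Hl1. apply Hm2; auto.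
Qed.

Lemma wdist_ex : forall G, wconnected1 G -> forall x y, exists o, is_wdist G x y o.
Proof.
  intros G Hc x y. destruct (classic (x = y)) as [e|n].
  - exists ord_zero; left; auto.
  - destruct (ord_min (fun o => exists w, joins G x y w /\ glen G w = o)) as [o [[w [Hj Hl]] Hm]].
    + destruct (Hc x y n) as [w Hw]; eauto.
    + exists o; right; split; [auto|split; [eauto|]]. intros w' Hw'; apply Hm; eauto.
Qed.

Lemma wdist_spec : forall G x y, (exists o, is_wdist G x y o) -> is_wdist G x y (wdist G x y).
Proof.
  intros G x y H. unfold wdist. destruct (excluded_middle_informative _) as [h|h]; [|contradiction].
  destruct (constructive_indefinite_description _ h) as [o Ho]. exact Ho.
Qed.

Lemma comb : forall G u1 u2, is_walk1 G u1 -> is_walk1 G u2 -> wx G u1 (wm G u1) = wx G u2 0 ->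
  exists c, is_walk1 G c /\ wx G c 0 = wx G u1 0 /\ wx G c (wm G c) = wx G u2 (wm G u2) /\
  cle (len1 G c) (nsum (len1 G u1) (len1 G u2)).
Proof.
  intros G u1 u2 H1 H2 Ey.
  destruct (classic (exists a, wx G u2 0 = inr a /\ (tipR G (wW G u1 (wm G u1 - 1)) a \/ tipL G (wW G u2 0) a)))
    as [E|NE].
  - destruct (cat1_ok G u1 u2 H1 H2 Ey E) as [c1 [c2 [c3 c4]]].
    exists (cat1 G u1 u2). split; [auto|split; [auto|split; [auto|]]].
    rewrite c4. unfold cle; lia.
  - destruct H1 as [A1 [B1 [C1 D1]]]. destruct H2 as [A2 [B2 [C2 D2]]].
    destruct (C1 (wm G u1 - 1) ltac:(lia)) as [Hv [Hn [HL HR]]].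
    destruct (C2 0 ltac:(lia)) as [Hv2 [Hn2 [HL2 HR2]]].
    replace (S (wm G u1 - 1)) with (wm G u1) in HR by lia.
    rewrite Ey in HR.
    assert (exists v, rightTerm _ (wW G u1 (wm G u1 - 1)) = Some v /\ leftTerm _ (wW G u2 0) = Some v) as [v [Er El]].
    { destruct (wx G u2 0) as [v|a] eqn:Ey2.
      - exists v; split; [exact HR|exact HL2].
      - destruct HR as [[v1 [R1 E1]]|T]; [|exfalso; apply NE; eauto].
        destruct HL2 as [[v2 [R2 E2]]|T]; [|exfalso; apply NE; eauto].
        exists v1. split; [exact R1|]. rewrite R2. congruence. }
    assert (MP := merge_ok G _ _ v Hv Hv2 Hn Hn2 Er El).
    assert (W1 : is_walk1 G u1) by exact (conj A1 (conj B1 (conj C1 D1))).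
    assert (W2 : is_walk1 G u2) by exact (conj A2 (conj B2 (conj C2 D2))).
    destruct (catm_ok G u1 u2 W1 W2 MP) as [c1 [c2 [c3 c4]]].
    exists (catm G u1 u2). auto.
Qed.

Theorem lemma7p1 (G : graph1) (Hc : wconnected1 G) :
  forall x y z : node G, maximal G x -> maximal G y -> maximal G z ->
    is_wdist G x y (wdist G x y) /\
    (wdist G x y = ord_zero <-> x = y) /\
    wdist G x y = wdist G y x /\
    ord_le (wdist G x z) (nsum (wdist G x y) (wdist G y z)).
Proof.
  intros x y z _ _ _.
  assert (D : forall a b, is_wdist G a b (wdist G a b)) by (intros; apply wdist_spec, wdist_ex, Hc).
  assert (Z : forall a, wdist G a a = ord_zero).
  { intros a. destruct (D a a) as [[_ E]|[ne _]]; [exact E|contradiction]. }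
  split; [apply D|]. split; [|split].
  - split.
    + intros H0. destruct (classic (x = y)) as [e|ne]; auto. exfalso.
      destruct (D x y) as [[e _]|[_ [[w [Hj Hl]] _]]]; [contradiction|].
      destruct (joins_walk1 G x y w Hj ne) as [w1 [P1 [_ [_ P4]]]].
      assert (P := len1_pos G w1 P1). rewrite P4, Hl, H0 in P. cbn in P. lia.
    + intros ->. apply Z.
  - apply (wdist_uniq G x y); [apply D|apply wdist_sym, D].
  - destruct (classic (x = z)) as [->|nxz].
    + rewrite Z. unfold ord_le; cbn; lia.
    + destruct (classic (x = y)) as [->|nxy].
      { rewrite Z. unfold ord_le, nsum; cbn; lia. }
      destruct (classic (y = z)) as [->|nyz].
      { rewrite Z. unfold ord_le, nsum; cbn; lia. }
      destruct (D x y) as [[e _]|[_ [[w1 [Hj1 Hl1]] _]]]; [contradiction|].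
      destruct (D y z) as [[e _]|[_ [[w2 [Hj2 Hl2]] _]]]; [contradiction|].
      destruct (D x z) as [[e _]|[_ [_ Hm]]]; [contradiction|].
      destruct (joins_walk1 G x y w1 Hj1 nxy) as [u1 [P1 [P2 [P3 P4]]]].
      destruct (joins_walk1 G y z w2 Hj2 nyz) as [u2 [Q1 [Q2 [Q3 Q4]]]].
      destruct (comb G u1 u2 P1 Q1 ltac:(congruence)) as [c [c1 [c2 [c3 c4]]]].
      apply ord_le_trans with (len1 G c).
      * apply (Hm (GW1 G c)). split; [exact c1|]. split; congruence.
      * apply cle_le. rewrite <- Hl1, <- Hl2, <- P4, <- Q4. exact c4.
Qed.
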